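(* Let $n\ge 5$ and let $f$ be an RDF of $P(n,2)$ of weight $\gamma_R(P(n,2))$ with $|V_2|$ minimum among all such minimum-weight RDFs. For any index $i$, if $r_f(V'(i,7)) \le 0.5$, then $u_{i+3}\notin V_2$.
   Context: For integers $n \ge 3$ and $1 \le k < n/2$, the generalized Petersen graph $P(n,k)$ has vertex set $\{v_i, u_i : 0 \le i \le n-1\}$ and edge set $\{v_iv_{i+1},\ v_iu_i,\ u_iu_{i+k} : 0 \le i \le n-1\}$, with subscripts taken modulo $n$. A Roman domination function (RDF) of a graph $G$ is a function $f: V(G)\to\{0,1,2\}$ such that every vertex $u$ with $f(u)=0$ is adjacent to at least one vertex $v$ with $f(v)=2$. Its weight is $\sum_{u\in V(G)} f(u)$; $\gamma_R(G)$ is the minimum weight of an RDF of $G$. For an RDF $f$ write $V_i=\{w: f(w)=i\}$, $i=0,1,2$. Define $g_f(w)=0.5$ if $w\in V_2$, $g_f(w)=1$ if $w\in V_1$, and $g_f(w)=0.5\,|N(w)\cap V_2|$ if $w\in V_0$, where $N(w)$ is the set of neighbors of $w$. Let $r_f(w)=g_f(w)-0.5$ and, for $S\subseteq V(P(n,2))$, $r_f(S)=\sum_{w\in S} r_f(w)$. For an integer $i$ and $t\ge 1$, $V'(i,t)=\{v_j,u_j : i\le j\le i+t-1\}$ (subscripts modulo $n$). *)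

(* Defs.v *)
From HB Require Import structures.
From mathcomp Require Import all_boot all_order all_algebra.
Import Order.TTheory GRing.Theory Num.Theory.

(* Vertices of P(n,k): (false, i) is v_i, (true, i) is u_i, with i : 'I_n. *)
Definition gpV (n : nat) : finType := (bool * 'I_n)%type.

Definition v_vtx {n} (w : gpV n) : bool := ~~ w.1.
Definition u_vtx {n} (w : gpV n) : bool := w.1.

Definition gp_adj (n k : nat) (x y : gpV n) : bool :=
  match x.1, y.1 with
  | false, false => (val y.2 == (val x.2 + 1) %% n) || (val x.2 == (val y.2 + 1) %% n)
  | false, true | true, false => val x.2 == val y.2
  | true, true => (val y.2 == (val x.2 + k) %% n) || (val x.2 == (val y.2 + k) %% n)
  end.

Definition is_RDF (n k : nat) (f : gpV n -> nat) : Prop :=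
  (forall w, f w <= 2)%N /\
  (forall w, f w = 0%N -> exists x, gp_adj n k w x /\ f x = 2%N).

Definition weight (n : nat) (f : gpV n -> nat) : nat := (\sum_(w : gpV n) f w)%N.

Definition is_gammaR_fun (n k : nat) (f : gpV n -> nat) : Prop :=
  is_RDF n k f /\ forall g, is_RDF n k g -> (weight n f <= weight n g)%N.

Definition V2 (n : nat) (f : gpV n -> nat) : {set gpV n} := [set w | f w == 2%N].

Local Open Scope ring_scope.

Definition g_f (n k : nat) (f : gpV n -> nat) (w : gpV n) : rat :=
  if f w == 2%N then 1 / 2
  else if f w == 1%N then 1
  else (#|[set x | gp_adj n k w x & f x == 2%N]|)%:R / 2.

Definition r_f (n k : nat) (f : gpV n -> nat) (w : gpV n) : rat := g_f n k f w - 1 / 2.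

Definition inVp (n : nat) (i t : nat) (w : gpV n) : bool :=
  [exists j : 'I_t, val w.2 == (i + j) %% n]%N.

Definition r_f_Vp (n k : nat) (f : gpV n -> nat) (i t : nat) : rat :=
  \sum_(w : gpV n | inVp n i t w) r_f n k f w.

(* Main.v *)
Require Import Defs.
From HB Require Import structures.
From mathcomp Require Import all_boot all_order all_algebra.
Import Order.TTheory GRing.Theory Num.Theory.

Set Implicit Arguments. Unset Strict Implicit. Unset Printing Implicit Defensive.

Lemma gp_adj_sym n k x y : gp_adj n k x y = gp_adj n k y x.
Proof. rewrite /gp_adj; case: x y => [[] a] [[] b] /=; by [rewrite orbC | rewrite eq_sym]. Qed.

Definition vx (m : nat) (t : bool) (a : nat) : gpV m.+1 := (t, inord (a %% m.+1)).

Lemma vx_val m t a : val (vx m t a).2 = a %% m.+1.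
Proof. by rewrite /= inordK // ltn_pmod. Qed.

Lemma vx_eq m t t' a b : (vx m t a == vx m t' b) = (t == t') && (a %% m.+1 == b %% m.+1).
Proof. by rewrite /vx xpair_eqE -val_eqE /= !inordK ?ltn_pmod. Qed.

Lemma vx_surj m (y : gpV m.+1) : y = vx m y.1 (val y.2).
Proof.
case: y => t b; apply/eqP; rewrite /vx xpair_eqE eqxx /= -val_eqE /=.
by rewrite modn_small // inordK.
Qed.

Lemma modS_ne m b d : 0 < d < m.+1 -> (b + d) %% m.+1 != b %% m.+1.
Proof.
move=> /andP [d0 dm]; apply/negP.
rewrite -{2}[b]addn0 eqn_modDl mod0n modn_small //.
by rewrite eqn0Ngt d0.
Qed.

Lemma pair_vx m t t' (y : 'I_m.+1) a : ((t, y) == vx m t' a) = (t == t') && (val y == a %% m.+1).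
Proof. by rewrite /vx xpair_eqE -val_eqE /= inordK ?ltn_pmod. Qed.

Lemma adjF m b w : gp_adj m.+1 2 w (vx m false b.+1) =
  (w \in [:: vx m false b; vx m false b.+2; vx m true b.+1]).
Proof.
rewrite gp_adj_sym; case: w => tw y; rewrite !inE !pair_vx /gp_adj /= inordK ?ltn_pmod //.
case: tw => /=; rewrite ?orbF /=.
- by rewrite eq_sym.
- rewrite modnDml addn1 orbC; congr (_ || _).
  by rewrite -[b.+1]addn1 eqn_modDr (modn_small (ltn_ord y)) eq_sym.
Qed.

Lemma adjT m b w : gp_adj m.+1 2 w (vx m true b.+2) =
  (w \in [:: vx m true b; vx m true b.+4; vx m false b.+2]).
Proof.
rewrite gp_adj_sym; case: w => tw y; rewrite !inE !pair_vx /gp_adj /= inordK ?ltn_pmod //.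
case: tw => /=; rewrite ?orbF /=.
- rewrite modnDml addn2 orbC; congr (_ || _).
  by rewrite -[b.+2]addn2 eqn_modDr (modn_small (ltn_ord y)) eq_sym.
- by rewrite eq_sym.
Qed.

Lemma neS m b d : 0 < d < m.+1 -> (d + b) %% m.+1 != b %% m.+1.
Proof. by rewrite addnC; exact: modS_ne. Qed.

Lemma uniqF m b : 2 < m.+1 ->
  uniq [:: vx m false b.+1; vx m false b; vx m false b.+2; vx m true b.+1].
Proof.
move=> Hm; rewrite /= !inE !vx_eq /= !negb_or /=.
have h1 : b.+1 %% m.+1 != b %% m.+1 by apply: (@neS m b 1); rewrite /= ltnW.
have h2 : b.+2 %% m.+1 != b %% m.+1 by apply: (@neS m b 2).
have h3 : b.+2 %% m.+1 != b.+1 %% m.+1 by apply: (@neS m b.+1 1); rewrite /= ltnW.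
by rewrite h1 eq_sym h3 eq_sym h2.
Qed.

Lemma uniqT m b : 4 < m.+1 ->
  uniq [:: vx m true b.+2; vx m true b; vx m true b.+4; vx m false b.+2].
Proof.
move=> Hm; rewrite /= !inE !vx_eq /= !negb_or /=.
have h1 : b.+2 %% m.+1 != b %% m.+1 by apply: (@neS m b 2); rewrite /= (leq_trans _ Hm).
have h2 : b.+4 %% m.+1 != b %% m.+1 by apply: (@neS m b 4).
have h3 : b.+4 %% m.+1 != b.+2 %% m.+1 by apply: (@neS m b.+2 2); rewrite /= (leq_trans _ Hm).
by rewrite h1 eq_sym h3 eq_sym h2.
Qed.

Lemma gamma_contra n f g : is_gammaR_fun n 2 f ->
  (forall h, is_gammaR_fun n 2 h -> (#|V2 n f| <= #|V2 n h|)%N) ->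
  is_RDF n 2 g -> (weight n g <= weight n f)%N -> (#|V2 n g| < #|V2 n f|)%N -> False.
Proof.
move=> [Hf Hmin] Hv Hg Hw Hc.
have Gg : is_gammaR_fun n 2 g.
  by split => // h Hh; apply: leq_trans Hw (Hmin h Hh).
by move: (Hv g Gg); rewrite leqNgt Hc.
Qed.

Lemma weight_contra n f g : is_gammaR_fun n 2 f -> is_RDF n 2 g ->
  (weight n g < weight n f)%N -> False.
Proof. by move=> [Hf Hmin] Hg; rewrite ltnNge Hmin. Qed.

Lemma sum_if1 (T : finType) (x : T) c : (\sum_(w : T) (if w == x then c else 0))%N = c.
Proof. by rewrite -big_mkcond big_pred1_eq. Qed.

Lemma card3 (T : finType) (y1 y2 y3 : T) (p : pred T) :
  uniq [:: y1; y2; y3] -> (forall z, p z -> z \in [:: y1; y2; y3]) ->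
  #|p| = (p y1 + p y2 + p y3)%N.
Proof.
move=> Hu Hp.
have -> : #|p| = #|[pred z in filter p [:: y1; y2; y3]]|.
  apply: eq_card => z; rewrite inE mem_filter.
  by case Hz: (p z) => //=; rewrite Hp.
rewrite (card_uniqP _) ?filter_uniq // size_filter /=.
by rewrite addn0 addnA.
Qed.

Lemma ruleB n f x y : is_gammaR_fun n 2 f -> gp_adj n 2 y x -> f x = 2%N -> f y = 1%N -> False.
Proof.
move=> Hf Hadj Hx Hy.
pose g w := if w == y then 0%N else f w.
apply: (weight_contra Hf (g := g)).
- have [Hb Hd] := Hf.1; split.
  + by move=> w; rewrite /g; case: ifP.
  + move=> w; rewrite /g; case: eqP => [-> _|Hwy Hw].
    * by exists x; split => //; case: eqP => [Exy|]; [move: Hx; rewrite Exy Hy|].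
    * have [z [Hz1 Hz2]] := Hd w Hw; exists z; split => //.
      by case: eqP => [Ez|] //; move: Hz2; rewrite Ez Hy.
- have E : (weight n g + 1 = weight n f)%N.
    rewrite /weight -(sum_if1 y 1) -big_split /=; apply: eq_bigr => w _.
    by rewrite /g; case: eqP => [->|]; rewrite ?Hy ?addn0.
  by rewrite -E addn1.
Qed.

Definition Pg n (f : gpV n -> nat) (x w : gpV n) : bool :=
  (f w == 0)%N && [forall z, (gp_adj n 2 w z && (f z == 2%N)) ==> (z == x)].

Lemma ruleAC n f x y1 y2 y3 : is_gammaR_fun n 2 f ->
  (forall h, is_gammaR_fun n 2 h -> (#|V2 n f| <= #|V2 n h|)%N) ->
  (forall w, gp_adj n 2 w x = (w \in [:: y1; y2; y3])) ->
  uniq [:: x; y1; y2; y3] -> f x = 2%N ->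
  [&& f y1 != 2%N, f y2 != 2%N, f y3 != 2%N &
      (1 < Pg f x y1 + Pg f x y2 + Pg f x y3)%N].
Proof.
move=> Hf Hmin HL Hu Hx; apply/idPn => Hneg.
have [Hb Hd] := Hf.1.
set has2 := (f y1 == 2%N) || (f y2 == 2%N) || (f y3 == 2%N).
pose gx := if has2 then 0%N else 1%N.
pose g w := if w == x then gx else if Pg f x w then 1%N else f w.
have Hx0 : Pg f x x = false by rewrite /Pg Hx.
have g2 : forall z, z != x -> f z = 2%N -> g z = 2%N.
  by move=> z /negbTE Hz Hfz; rewrite /g Hz /Pg Hfz.
have adjx : forall y, y \in [:: y1; y2; y3] -> gp_adj n 2 x y.
  by move=> y Hy; rewrite gp_adj_sym HL.
have nex : forall y, y \in [:: y1; y2; y3] -> y != x.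
  move=> y Hy; apply/negP => /eqP Exy; move: Hu; rewrite /= -Exy Hy.
  by [].
have PgL : forall z, Pg f x z -> z \in [:: y1; y2; y3].
  move=> z /andP [/eqP Hz0 /forallP Hz].
  have [w [Hw1 Hw2]] := Hd z Hz0.
  move: (Hz w); rewrite Hw1 Hw2 eqxx /= => /eqP Ewx.
  by rewrite -HL -Ewx.
apply: (gamma_contra Hf Hmin (g := g)).
- split.
  + by move=> w; rewrite /g /gx; case: ifP => _; [case: ifP | case: ifP => _ //; apply: Hb].
  + move=> w; rewrite {1}/g; case: eqP => [-> | /eqP Hwx].
    * rewrite /gx; case Hh: has2 => // _.
      have [y Hy Hfy] : exists2 y, y \in [:: y1; y2; y3] & f y = 2%N.
        move: Hh; rewrite /has2; case/orP => [/orP [] | ] /eqP H.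
        - by exists y1; rewrite ?inE ?eqxx.
        - by exists y2; rewrite ?inE ?eqxx ?orbT.
        - by exists y3; rewrite ?inE ?eqxx ?orbT.
      by exists y; split; [apply: adjx | apply: g2 => //; apply: nex].
    * case HP: (Pg f x w) => // Hfw.
      have [z [Hz1 Hz2]] := Hd w Hfw.
      case: (eqVneq z x) => [Ezx | Hzx]; last by exists z; split => //; apply: g2.
      move: HP; rewrite /Pg Hfw eqxx /= => /negbT; rewrite negb_forall => /existsP [z' Hz'].
      move: Hz'; rewrite negb_imply => /andP [/andP [Ha Hb2] Hne].
      by exists z'; split => //; apply: g2 => //; apply/eqP.
- have E : (weight n g + 2 = weight n f + gx + #|Pg f x|)%N.
    have Hcd : (\sum_w (Pg f x w : nat))%N = #|Pg f x|.
      rewrite -sum1_card [RHS]big_mkcond; apply: eq_bigr => w _.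
      by have -> : (w \in Pg f x) = Pg f x w by []; case: (Pg f x w).
    rewrite /weight -Hcd -(sum_if1 x 2) -(sum_if1 x gx) /=.
    rewrite -!big_split /=; apply: eq_bigr => w _.
    rewrite /g; case: (eqVneq w x) => [->|_]; first by rewrite Hx0 Hx addn0 addnC.
    case HP: (Pg f x w) => /=; last by rewrite !addn0.
    by move/andP: HP => [/eqP -> _].
  have Hc : #|Pg f x| = (Pg f x y1 + Pg f x y2 + Pg f x y3)%N.
    by apply: card3 => //; move: Hu => /andP [].
  have Hs : (gx + #|Pg f x| <= 2)%N.
    have Pk : forall y, f y == 2%N -> Pg f x y = false by move=> y /eqP Hy; rewrite /Pg Hy.
    rewrite Hc /gx; move: Hneg (Pk y1) (Pk y2) (Pk y3); rewrite /has2.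
    case: (f y1 == 2%N); case: (f y2 == 2%N); case: (f y3 == 2%N);
    case: (Pg f x y1); case: (Pg f x y2); case: (Pg f x y3) => /= Hn H1 H2 H3;
    first [by [] | by move: (H1 isT) | by move: (H2 isT) | by move: (H3 isT)].
  by rewrite -(leq_add2r 2) E -addnA leq_add2l.
- have Hs : V2 n g \subset V2 n f :\ x.
    apply/subsetP => w; rewrite !inE /g; case: (eqVneq w x) => [->|Hwx] /=.
      by rewrite /gx; case: ifP.
    by case: (Pg f x w).
  apply: (leq_ltn_trans (subset_leq_card Hs)).
  rewrite [in X in (_ < X)%N](cardsD1 x) inE Hx eqxx.
  by [].
Qed.

Definition s2 n (f : gpV n -> nat) (a b c : gpV n) : nat :=
  ((f a == 2%N) + (f b == 2%N) + (f c == 2%N))%N.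
Definition pv n (f : gpV n -> nat) (y a b c : gpV n) : bool :=
  (f y == 0%N) && (s2 f a b c == 1%N).

Lemma char_sym n (x y1 y2 y3 : gpV n) :
  (forall w, gp_adj n 2 w x = (w \in [:: y1; y2; y3])) ->
  forall y, y \in [:: y1; y2; y3] -> gp_adj n 2 y x.
Proof. by move=> HL y Hy; rewrite HL. Qed.

Lemma Pg_pv n f (x y z1 z2 z3 : gpV n) :
  (forall w, gp_adj n 2 w y = (w \in [:: z1; z2; z3])) ->
  uniq [:: z1; z2; z3] -> x \in [:: z1; z2; z3] -> f x = 2%N ->
  Pg f x y -> pv f y z1 z2 z3.
Proof.
move=> HL Hu Hx Hfx /andP [Hy0 /forallP HP]; rewrite /pv Hy0 /=.
have E : forall z, z \in [:: z1; z2; z3] -> (f z == 2%N) = (z == x).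
  move=> z Hz; case: (eqVneq z x) => [->|Hzx]; first by rewrite Hfx.
  apply/negP => Hf2; move: (HP z); rewrite gp_adj_sym HL Hz Hf2 /=.
  by rewrite (negbTE Hzx).
rewrite /s2 !E ?inE ?eqxx ?orbT //.
by have := count_uniq_mem x Hu; rewrite Hx /= addn0 addnA => ->.
Qed.

Lemma vrules n f (x y1 y2 y3 a1 b1 c1 a2 b2 c2 a3 b3 c3 : gpV n) :
  is_gammaR_fun n 2 f ->
  (forall h, is_gammaR_fun n 2 h -> (#|V2 n f| <= #|V2 n h|)%N) ->
  (forall w, gp_adj n 2 w x = (w \in [:: y1; y2; y3])) ->
  uniq [:: x; y1; y2; y3] ->
  (forall w, gp_adj n 2 w y1 = (w \in [:: a1; b1; c1])) -> uniq [:: y1; a1; b1; c1] ->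
  (forall w, gp_adj n 2 w y2 = (w \in [:: a2; b2; c2])) -> uniq [:: y2; a2; b2; c2] ->
  (forall w, gp_adj n 2 w y3 = (w \in [:: a3; b3; c3])) -> uniq [:: y3; a3; b3; c3] ->
  [&& (f x == 0%N) ==> (s2 f y1 y2 y3 != 0%N),
      (f x == 1%N) ==> (s2 f y1 y2 y3 == 0%N) &
      (f x == 2%N) ==> ((s2 f y1 y2 y3 == 0%N) &&
          (1 < pv f y1 a1 b1 c1 + pv f y2 a2 b2 c2 + pv f y3 a3 b3 c3)%N)].
Proof.
move=> Hf Hmin HL Hu H1 Hu1 H2 Hu2 H3 Hu3.
have [Hb Hd] := Hf.1.
have Hyx : forall y, y \in [:: y1; y2; y3] -> gp_adj n 2 x y.
  by move=> y Hy; rewrite (gp_adj_sym _ x y) HL.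
apply/and3P; split.
- apply/implyP => /eqP H0; have [z [Hz1 Hz2]] := Hd x H0.
  move: Hz1; rewrite (gp_adj_sym _ x z) HL !inE /s2.
  by case/or3P => /eqP Ez; rewrite -Ez Hz2 eqxx ?addnS.
- apply/implyP => /eqP H1x; rewrite /s2.
  case E1: (f y1 == 2%N); first by case: (ruleB Hf (x := y1) (y := x)) => //;
    [apply: Hyx; rewrite !inE eqxx ?orbT | exact/eqP].
  case E2: (f y2 == 2%N); first by case: (ruleB Hf (x := y2) (y := x)) => //;
    [apply: Hyx; rewrite !inE eqxx ?orbT | exact/eqP].
  case E3: (f y3 == 2%N); first by case: (ruleB Hf (x := y3) (y := x)) => //;
    [apply: Hyx; rewrite !inE eqxx ?orbT | exact/eqP].
  by [].
- apply/implyP => /eqP H2x.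
  have := ruleAC Hf Hmin HL Hu H2x; case/and4P => /negbTE E1 /negbTE E2 /negbTE E3 Hp.
  rewrite /s2 E1 E2 E3 /=.
  have X1 : x \in [:: a1; b1; c1] by rewrite -H1 Hyx ?inE ?eqxx.
  have X2 : x \in [:: a2; b2; c2] by rewrite -H2 Hyx ?inE ?eqxx ?orbT.
  have X3 : x \in [:: a3; b3; c3] by rewrite -H3 Hyx ?inE ?eqxx ?orbT.
  move: Hu1 Hu2 Hu3 => /andP [_ U1] /andP [_ U2] /andP [_ U3].
  have P1 := Pg_pv H1 U1 X1 H2x; have P2 := Pg_pv H2 U2 X2 H2x; have P3 := Pg_pv H3 U3 X3 H2x.
  apply: (leq_trans Hp); apply: leq_add; first apply: leq_add.

  - by move: P1; case: (Pg f x y1) => // /(_ isT) ->.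
  - by move: P2; case: (Pg f x y2) => // /(_ isT) ->.
  - by move: P3; case: (Pg f x y3) => // /(_ isT) ->.
Qed.

Definition cnt2 (h : bool -> nat -> nat) (t : bool) (c : nat) : nat :=
  if t then ((h true c.-2 == 2%N) + (h true c.+2 == 2%N) + (h false c == 2%N))%N
  else ((h false c.-1 == 2%N) + (h false c.+1 == 2%N) + (h true c == 2%N))%N.
Definition privb h t c := (h t c == 0%N) && (cnt2 h t c == 1%N).
Definition privcnt h t c : nat :=
  if t then (privb h true c.-2 + privb h true c.+2 + privb h false c)%N
  else (privb h false c.-1 + privb h false c.+1 + privb h true c)%N.
Definition rdfT h t c := (h t c == 0%N) ==> (cnt2 h t c != 0%N).
Definition BT h t c := (h t c == 1%N) ==> (cnt2 h t c == 0%N).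
Definition ACT h t c := (h t c == 2%N) ==> ((cnt2 h t c == 0%N) && (1 < privcnt h t c)%N).
Definition Dd h t c : nat := if h t c == 2%N then 0%N else if h t c == 1%N then 1%N else (cnt2 h t c).-1.

Definition hwin m (f : gpV m.+1 -> nat) Q t j := f (vx m t (j + Q)).

Lemma win_rules m f Q t c : 4 < m.+1 -> is_gammaR_fun m.+1 2 f ->
  (forall h, is_gammaR_fun m.+1 2 h -> (#|V2 m.+1 f| <= #|V2 m.+1 h|)%N) ->
  3 < c ->
  [&& rdfT (hwin f Q) t c, BT (hwin f Q) t c & ACT (hwin f Q) t c].
Proof.
move=> Hm Hf Hmin; case: c => [|[|[|[|c]]]] // _.
have Hm2 : 2 < m.+1 by apply: leq_trans Hm.
case: t.
- exact (vrules Hf Hmin (@adjT m (c.+2 + Q)) (@uniqT m (c.+2 + Q) Hm)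
           (@adjT m (c + Q)) (@uniqT m (c + Q) Hm)
           (@adjT m (c.+4 + Q)) (@uniqT m (c.+4 + Q) Hm)
           (@adjF m (c.+3 + Q)) (@uniqF m (c.+3 + Q) Hm2)).
- exact (vrules Hf Hmin (@adjF m (c.+3 + Q)) (@uniqF m (c.+3 + Q) Hm2)
           (@adjF m (c.+2 + Q)) (@uniqF m (c.+2 + Q) Hm2)
           (@adjF m (c.+4 + Q)) (@uniqF m (c.+4 + Q) Hm2)
           (@adjT m (c.+2 + Q)) (@uniqT m (c.+2 + Q) Hm)).
Qed.

Inductive cst := CR of bool & nat | CB of bool & nat | CA of bool & nat
  | CS of bool & nat | CP of bool & nat & bool & nat | CG.

Definition cst_enc (c : cst) : nat * (bool * nat * bool * nat) :=
  match c with
  | CR t c => (0, (t, c, false, 0))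
  | CB t c => (1, (t, c, false, 0))
  | CA t c => (2, (t, c, false, 0))
  | CS t c => (3, (t, c, false, 0))
  | CP t1 c1 t2 c2 => (4, (t1, c1, t2, c2))
  | CG => (5, (false, 0, false, 0))
  end%N.
Definition cst_dec (x : nat * (bool * nat * bool * nat)) : cst :=
  let: (k, (t1, c1, t2, c2)) := x in
  match k with
  | 0 => CR t1 c1 | 1 => CB t1 c1 | 2 => CA t1 c1 | 3 => CS t1 c1
  | 4 => CP t1 c1 t2 c2 | _ => CG end.
Lemma cst_encK : cancel cst_enc cst_dec. Proof. by case. Qed.
HB.instance Definition _ := Equality.copy cst (can_type cst_encK).

Definition sem (h : bool -> nat -> nat) (c : cst) : bool :=
  match c with
  | CR t c => rdfT h t c
  | CB t c => BT h t c
  | CA t c => ACT h t c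
  | CS t c => (Dd h t c <= 1)%N
  | CP t1 c1 t2 c2 => (Dd h t1 c1 + Dd h t2 c2 <= 1)%N
  | CG => h true 13 == 2%N
  end.

Definition nbp (t : bool) (c : nat) : seq (bool * nat) :=
  if t then [:: (true, c.-2); (true, c.+2); (false, c)]
  else [:: (false, c.-1); (false, c.+1); (true, c)].
Definition accn t c := (t, c) :: nbp t c.

Definition acc (c : cst) : seq (bool * nat) :=
  match c with
  | CR t c | CB t c | CS t c => accn t c
  | CA t c => accn t c ++ flatten [seq accn p.1 p.2 | p <- nbp t c]
  | CP t1 c1 t2 c2 => accn t1 c1 ++ accn t2 c2
  | CG => [:: (true, 13)]
  end.

Lemma sem_ext h1 h2 c :
  (forall t j, (t, j) \in acc c -> h1 t j = h2 t j) -> sem h1 c = sem h2 c.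
Proof.
case: c => [t c|t c|t c|t c|t1 c1 t2 c2|] /= H.
- by case: t H => H; rewrite /rdfT /cnt2 !H ?inE ?eqxx ?orbT.
- by case: t H => H; rewrite /BT /cnt2 !H ?inE ?eqxx ?orbT.
- by case: t H => H; rewrite /ACT /privcnt /privb /cnt2 !H ?inE ?eqxx ?orbT.
- by case: t H => H; rewrite /Dd /cnt2 !H ?inE ?eqxx ?orbT.
- by case: t1 H => H; case: t2 H => H; rewrite /Dd /cnt2 !H ?inE ?eqxx ?orbT.
- by rewrite H ?inE.
Qed.

Definition look (ix : bool -> nat -> nat) (r : seq nat) (t : bool) (j : nat) : nat :=
  nth 0%N r (ix t j).

Definition ready ix (k : nat) (c : cst) : bool :=
  all (fun p => ix p.1 p.2 < k)%N (acc c).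

Fixpoint search ix (bks : seq (seq cst)) (fuel : nat) (r : seq nat) : bool :=
  if has (fun c => ~~ sem (look ix r) c && ready ix (size r) c) (nth [::] bks (size r).-1)
  then true
  else (if fuel is f'.+1 then all (fun v => search ix bks f' (rcons r v)) [:: 0%N; 1%N; 2%N]
      else false).

Lemma search_sound ix bks (P : cst -> Prop) :
  (forall k c, c \in nth [::] bks k -> P c) ->
  forall fuel r s, search ix bks fuel r -> size s = fuel -> all (fun v => v <= 2)%N s ->
  exists c, P c /\ ~~ sem (look ix (r ++ s)) c.
Proof.
move=> HP; elim=> [|f IH] r s /=.
- case: ifP => // /hasP [c Hc /andP [Hs Hr]] _ Hsz _.
  exists c; split; first exact: HP Hc.
  rewrite (@sem_ext _ (look ix r)) // => t j Hj.
  move/allP: Hr => /(_ _ Hj) /= Hlt.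
  by rewrite /look nth_cat Hlt.
- case: ifP.
  + move=> /hasP [c Hc /andP [Hs Hr]] _ Hsz _.
    exists c; split; first exact: HP Hc.
    rewrite (@sem_ext _ (look ix r)) // => t j Hj.
    move/allP: Hr => /(_ _ Hj) /= Hlt.
    by rewrite /look nth_cat Hlt.
  + move=> _; case: s => [|v s] //= /and4P [H0 H1 H2 _] [Hsz] /andP [Hv Hs].
    have Hv3 : search ix bks f (rcons r v).
      by move: Hv; case: v {Hs} => [|[|[|v]]] //= _.
    have [c [Pc Hc]] := IH (rcons r v) s Hv3 Hsz Hs.
    by exists c; rewrite -cat_rcons.
Qed.

Definition lvl ix c : nat := foldr maxn 0%N [seq ix p.1 p.2 | p <- acc c].
Definition bks ix K (cs : seq cst) := mkseq (fun k => [seq c <- cs | lvl ix c == k]) K.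
Definition tblL : seq (bool * nat) := [:: (true, 13); (false, 13); (true, 14); (false, 14); (false, 12); (false, 15); (true, 12); (false, 11); (true, 10); (true, 16); (true, 11); (true, 15); (false, 10); (false, 16); (true, 8); (true, 18); (true, 17); (true, 9); (false, 17); (false, 9); (false, 8); (false, 18); (true, 7); (false, 7); (true, 19); (false, 19)].
Definition csL : seq cst := [:: CR false 8; CB false 8; CR false 9; CB false 9; CA false 9; CR false 10; CB false 10; CA false 10; CR false 11; CB false 11; CA false 11; CR false 12; CB false 12; CA false 12; CR false 13; CB false 13; CA false 13; CR false 14; CB false 14; CA false 14; CR false 15; CB false 15; CA false 15; CR false 16; CB false 16; CA false 16; CR false 17; CB false 17; CA false 17; CR false 18; CB false 18; CR true 9; CB true 9; CR true 10; CB true 10; CR true 11; CB true 11; CA true 11; CR true 12; CB true 12; CA true 12; CR true 13; CB true 13; CA true 13; CR true 14; CB true 14; CA true 14; CR true 15; CB true 15; CA true 15; CR true 16; CB true 16; CR true 17; CB true 17; CS false 10; CS false 11; CS false 12; CS false 13; CS false 14; CS false 15; CS false 16; CS true 10; CS true 11; CS true 12; CS true 13; CS true 14; CS true 15; CS true 16; CP false 10 false 11; CP false 10 false 12; CP false 10 false 13; CP false 10 false 14; CP false 10 false 15; CP false 10 false 16; CP false 10 true 10; CP false 10 true 11; CP false 10 true 12; CP false 10 true 13; CP false 10 true 14; CP false 10 true 15; CP false 10 true 16; CP false 11 false 12; CP false 11 false 13; CP false 11 false 14; CP false 11 false 15; CP false 11 false 16; CP false 11 true 10; CP false 11 true 11;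 CP false 11 true 12; CP false 11 true 13; CP false 11 true 14; CP false 11 true 15; CP false 11 true 16; CP false 12 false 13; CP false 12 false 14; CP false 12 false 15; CP false 12 false 16; CP false 12 true 10; CP false 12 true 11; CP false 12 true 12; CP false 12 true 13; CP false 12 true 14; CP false 12 true 15; CP false 12 true 16; CP false 13 false 14; CP false 13 false 15; CP false 13 false 16; CP false 13 true 10; CP false 13 true 11; CP false 13 true 12; CP false 13 true 13; CP false 13 true 14; CP false 13 true 15; CP false 13 true 16; CP false 14 false 15; CP false 14 false 16; CP false 14 true 10; CP false 14 true 11; CP false 14 true 12; CP false 14 true 13; CP false 14 true 14; CP false 14 true 15; CP false 14 true 16; CP false 15 false 16; CP false 15 true 10; CP false 15 true 11; CP false 15 true 12; CP false 15 true 13; CP false 15 true 14; CP false 15 true 15; CP false 15 true 16; CP false 16 true 10; CP false 16 true 11; CP false 16 true 12; CP false 16 true 13; CP false 16 true 14; CP false 16 true 15; CP false 16 true 16; CP true 10 true 11; CP true 10 true 12; CP true 10 true 13; CP true 10 true 14; CP true 10 true 15; CP true 10 true 16; CP true 11 true 12; CP true 11 true 13; CP true 11 true 14; CP true 11 true 15; CP true 11 true 16; CP true 12 true 13; CP true 12 true 14; CP true 12 true 15; CP true 12 true 16; CP true 13 true 14; CP true 13 true 15; CP true 13 true 16; CP true 14 true 15; CP true 14 true 16; CP true 15 true 16; CG].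
Definition tblF : seq (bool * nat) := [:: (true, 3); (false, 3); (true, 2); (true, 4); (false, 2); (false, 4); (true, 1); (false, 1); (false, 0); (true, 0)].
Definition csF : seq cst := [:: CR false 8; CB false 8; CR false 9; CB false 9; CA false 9; CR false 10; CB false 10; CA false 10; CR false 11; CB false 11; CA false 11; CR false 12; CB false 12; CA false 12; CR false 13; CB false 13; CA false 13; CR false 14; CB false 14; CA false 14; CR false 15; CB false 15; CA false 15; CR false 16; CB false 16; CA false 16; CR false 17; CB false 17; CA false 17; CR false 18; CB false 18; CR true 9; CB true 9; CR true 10; CB true 10; CR true 11; CB true 11; CA true 11; CR true 12; CB true 12; CA true 12; CR true 13; CB true 13; CA true 13; CR true 14; CB true 14; CA true 14; CR true 15; CB true 15; CA true 15; CR true 16; CB true 16; CR true 17; CB true 17; CS false 10; CS false 11; CS false 12; CS false 13; CS false 14; CS true 10; CS true 11; CS true 12; CS true 13; CS true 14; CP false 10 false 11; CP false 10 false 12; CP false 10 false 13; CP false 10 false 14; CP false 10 true 10; CP false 10 true 11; CP false 10 true 12; CP false 10 true 13; CP false 10 true 14; CP false 11 false 12; CP false 11 false 13; CP false 11 false 14; CP false 11 true 10; CP false 11 true 11; CP false 11 true 12; CP false 11 true 13; CP false 11 true 14; CP false 12 false 13; CP false 12 false 14; CP false 12 true 10; CP false 12 true 11; CP false 12 true 12; CP false 12 true 13; CP false 12 true 14; CP false 13 false 14; CP false 13 true 10; CP false 13 true 11; CP false 13 true 12; CP false 13 true 13; CP false 13 true 14; CP false 14 true 10; CP false 14 true 11;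 CP false 14 true 12; CP false 14 true 13; CP false 14 true 14; CP true 10 true 11; CP true 10 true 12; CP true 10 true 13; CP true 10 true 14; CP true 11 true 12; CP true 11 true 13; CP true 11 true 14; CP true 12 true 13; CP true 12 true 14; CP true 13 true 14; CG].
Definition tblS : seq (bool * nat) := [:: (true, 1); (false, 1); (true, 0); (true, 2); (false, 0); (false, 5); (false, 2); (true, 4); (false, 4); (false, 3); (true, 3); (true, 5)].
Definition csS : seq cst := [:: CR false 8; CB false 8; CR false 9; CB false 9; CA false 9; CR false 10; CB false 10; CA false 10; CR false 11; CB false 11; CA false 11; CR false 12; CB false 12; CA false 12; CR false 13; CB false 13; CA false 13; CR false 14; CB false 14; CA false 14; CR false 15; CB false 15; CA false 15; CR false 16; CB false 16; CA false 16; CR false 17; CB false 17; CA false 17; CR false 18; CB false 18; CR true 9; CB true 9; CR true 10; CB true 10; CR true 11; CB true 11; CA true 11; CR true 12; CB true 12; CA true 12; CR true 13; CB true 13; CA true 13; CR true 14; CB true 14; CA true 14; CR true 15; CB true 15; CA true 15; CR true 16; CB true 16; CR true 17; CB true 17; CS false 10; CS false 11; CS false 12; CS false 13; CS false 14; CS false 15; CS true 10; CS true 11; CS true 12; CS true 13; CS true 14; CS true 15; CP false 10 false 11; CP false 10 false 12; CP false 10 false 13; CP false 10 false 14; CP false 10 false 15; CP false 10 true 10; CP false 10 true 11; CP false 10 true 12; CP false 10 true 13; CP false 10 true 14; CP false 10 true 15; CP false 11 false 12; CP false 11 false 13; CP false 11 false 14; CP false 11 false 15; CP false 11 true 10; CP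 false 11 true 11; CP false 11 true 12; CP false 11 true 13; CP false 11 true 14; CP false 11 true 15; CP false 12 false 13; CP false 12 false 14; CP false 12 false 15; CP false 12 true 10; CP false 12 true 11; CP false 12 true 12; CP false 12 true 13; CP false 12 true 14; CP false 12 true 15; CP false 13 false 14; CP false 13 false 15; CP false 13 true 10; CP false 13 true 11; CP false 13 true 12; CP false 13 true 13; CP false 13 true 14; CP false 13 true 15; CP false 14 false 15; CP false 14 true 10; CP false 14 true 11; CP false 14 true 12; CP false 14 true 13; CP false 14 true 14; CP false 14 true 15; CP false 15 true 10; CP false 15 true 11; CP false 15 true 12; CP false 15 true 13; CP false 15 true 14; CP false 15 true 15; CP true 10 true 11; CP true 10 true 12; CP true 10 true 13; CP true 10 true 14; CP true 10 true 15; CP true 11 true 12; CP true 11 true 13; CP true 11 true 14; CP true 11 true 15; CP true 12 true 13; CP true 12 true 14; CP true 12 true 15; CP true 13 true 14; CP true 13 true 15; CP true 14 true 15; CG].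
Definition ixL (t : bool) (j : nat) : nat :=
  if t then match j with
    | 7 => 22
    | 8 => 14
    | 9 => 17
    | 10 => 8
    | 11 => 10
    | 12 => 6
    | 13 => 0
    | 14 => 2
    | 15 => 11
    | 16 => 9
    | 17 => 16
    | 18 => 15
    | 19 => 24
    | _ => 99 end
  else match j with
    | 7 => 23
    | 8 => 20
    | 9 => 19
    | 10 => 12
    | 11 => 7
    | 12 => 4
    | 13 => 1
    | 14 => 3
    | 15 => 5
    | 16 => 13
    | 17 => 18
    | 18 => 21
    | 19 => 25
    | _ => 99 end.
Definition ixF (t : bool) (j : nat) : nat :=
  if t then match j with
    | 0 => 9
    | 1 => 6
    | 2 => 2
    | 3 => 0
    | 4 => 3
    | 5 => 9
    | 6 => 6
    | 7 => 2
    | 8 => 0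
    | 9 => 3
    | 10 => 9
    | 11 => 6
    | 12 => 2
    | 13 => 0
    | 14 => 3
    | 15 => 9
    | 16 => 6
    | 17 => 2
    | 18 => 0
    | 19 => 3
    | 20 => 9
    | 21 => 6
    | 22 => 2
    | 23 => 0
    | _ => 99 end
  else match j with
    | 0 => 8
    | 1 => 7
    | 2 => 4
    | 3 => 1
    | 4 => 5
    | 5 => 8
    | 6 => 7
    | 7 => 4
    | 8 => 1
    | 9 => 5
    | 10 => 8
    | 11 => 7
    | 12 => 4
    | 13 => 1
    | 14 => 5
    | 15 => 8
    | 16 => 7
    | 17 => 4
    | 18 => 1
    | 19 => 5
    | 20 => 8
    | 21 => 7
    | 22 => 4
    | 23 => 1
    | _ => 99 end.
Definition ixS (t : bool) (j : nat) : nat :=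
  if t then match j with
    | 0 => 2
    | 1 => 0
    | 2 => 3
    | 3 => 10
    | 4 => 7
    | 5 => 11
    | 6 => 2
    | 7 => 0
    | 8 => 3
    | 9 => 10
    | 10 => 7
    | 11 => 11
    | 12 => 2
    | 13 => 0
    | 14 => 3
    | 15 => 10
    | 16 => 7
    | 17 => 11
    | 18 => 2
    | 19 => 0
    | 20 => 3
    | 21 => 10
    | 22 => 7
    | 23 => 11
    | _ => 99 end
  else match j with
    | 0 => 4
    | 1 => 1
    | 2 => 6
    | 3 => 9
    | 4 => 8
    | 5 => 5
    | 6 => 4
    | 7 => 1
    | 8 => 6
    | 9 => 9
    | 10 => 8
    | 11 => 5
    | 12 => 4
    | 13 => 1
    | 14 => 6
    | 15 => 9
    | 16 => 8
    | 17 => 5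
    | 18 => 4
    | 19 => 1
    | 20 => 6
    | 21 => 9
    | 22 => 8
    | 23 => 5
    | _ => 99 end.

Lemma r_ge0 n f w : is_RDF n 2 f -> (0 <= r_f n 2 f w)%R.
Proof.
move=> [Hb Hd]; rewrite /r_f /g_f subr_ge0.
case: eqP => [_|H2]; first by [].
case: eqP => [_|H1]; first by rewrite ler_pdivrMr // mul1r ler1n.
have H0 : f w = 0%N by move: (Hb w) H2 H1; case: (f w) => [|[|[|]]].
have [z [Hz1 Hz2]] := Hd w H0.
rewrite ler_pM2r ?invr_gt0 // ler1n card_gt0; apply/set0Pn; exists z.
by rewrite inE Hz1 Hz2 eqxx.
Qed.

Lemma r_vert n f x y1 y2 y3 : is_RDF n 2 f ->
  (forall w, gp_adj n 2 w x = (w \in [:: y1; y2; y3])) -> uniq [:: y1; y2; y3] ->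
  r_f n 2 f x = ((if f x == 2%N then 0%N else if f x == 1%N then 1%N
                  else (s2 f y1 y2 y3).-1)%:R / 2)%R.
Proof.
move=> [Hb Hd] HL Hu.
have Hc : #|[set z | gp_adj n 2 x z & f z == 2%N]| = s2 f y1 y2 y3.
  rewrite (eq_card (B := fun z => gp_adj n 2 x z && (f z == 2%N))); last by move=> z; rewrite inE.
  rewrite (card3 Hu) /s2.
    by rewrite !(gp_adj_sym _ x) !HL !inE !eqxx ?orbT.
  by move=> z /andP [Hz _]; rewrite -HL gp_adj_sym.
rewrite /r_f /g_f Hc.
case: eqP => [_|H2]; first by rewrite mul0r subrr.
case: eqP => [_|H1]; first by rewrite mul1r -[X in (X - _)%R](@divff _ (2%:R)%R) // -mulrBl -[1%R]/((1%:R)%R) subrr.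
have H0 : f x = 0%N by move: (Hb x) H2 H1; case: (f x) => [|[|[|]]].
have [z [Hz1 Hz2]] := Hd x H0.
have : (0 < s2 f y1 y2 y3)%N.
  rewrite -Hc card_gt0; apply/set0Pn; exists z; by rewrite inE Hz1 Hz2 eqxx.
case: (s2 f y1 y2 y3) => [|s] //= _.
by rewrite -mulrBl -natr1 addrK.
Qed.

Lemma r_win m f Q t c : is_RDF m.+1 2 f -> 4 < m.+1 -> 3 < c ->
  r_f m.+1 2 f (vx m t (c + Q)) = ((Dd (hwin f Q) t c)%:R / 2)%R.
Proof.
move=> Hf Hm; case: c => [|[|[|[|c]]]] // _.
have Hm2 : 2 < m.+1 by apply: leq_trans Hm.
case: t.
- have U := @uniqT m (c.+2 + Q) Hm; move/andP: U => [_ U].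
  exact (r_vert Hf (@adjT m (c.+2 + Q)) U).
- have U := @uniqF m (c.+3 + Q) Hm2; move/andP: U => [_ U].
  exact (r_vert Hf (@adjF m (c.+3 + Q)) U).
Qed.

Lemma inW m i t c : (10 <= c <= 16)%N -> inVp m.+1 i 7 (vx m t (c + (i + m * 10))).
Proof.
move=> /andP [H1 H2]; apply/existsP.
have Hd : (c - 10 < 7)%N by rewrite ltn_subLR.
exists (Ordinal Hd); rewrite vx_val /=.
rewrite -{1}(subnKC H1).
set d := c - 10.
have -> : 10 + d + (i + m * 10) = i + d + m.+1 * 10.
  by rewrite mulSn !addnA; congr (_ + _); rewrite [10 + d]addnC addnAC [d + i]addnC.
by rewrite addnC mulnC modnMDl.
Qed.

Lemma vx_ne m Q t1 c1 t2 c2 : (t1 != t2) || (c1 %% m.+1 != c2 %% m.+1) ->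
  vx m t1 (c1 + Q) != vx m t2 (c2 + Q).
Proof. by rewrite vx_eq negb_and eqn_modDr. Qed.

Lemma sum1 (T : finType) (P : pred T) (F : T -> rat) x :
  (forall w, 0 <= F w)%R -> P x -> (F x <= \sum_(w | P w) F w)%R.
Proof. move=> H Px; rewrite (bigD1 x) //= lerDl; exact: sumr_ge0. Qed.

Lemma sum2 (T : finType) (P : pred T) (F : T -> rat) x y :
  (forall w, 0 <= F w)%R -> P x -> P y -> x != y -> (F x + F y <= \sum_(w | P w) F w)%R.
Proof.
move=> H Px Py Hxy; rewrite (bigD1 x) //= (bigD1 y) /=; last by rewrite Py eq_sym Hxy.
by rewrite addrA lerDl; exact: sumr_ge0.
Qed.

Lemma half_le1 (a : nat) : ((a%:R / 2 : rat) <= 1 / 2)%R -> (a <= 1)%N.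
Proof. by rewrite ler_pM2r ?invr_gt0 // -[1%R]/((1%:R)%R) ler_nat. Qed.

Lemma half_le2 (a b : nat) : ((a%:R / 2 + b%:R / 2 : rat) <= 1 / 2)%R -> (a + b <= 1)%N.
Proof. by rewrite -mulrDl -natrD => /half_le1. Qed.

Lemma ltn_modne N c1 c2 : (c1 < c2)%N -> (c2 < c1 + N)%N -> c1 %% N != c2 %% N.
Proof.
move=> H1 H2; rewrite -(subnKC (ltnW H1)) eq_sym.
case: N H2 => [|N] H2; first by move: H2; rewrite addn0 ltnNge ltnW.
apply: modS_ne; rewrite subn_gt0 H1 /=.
by rewrite ltn_subLR // ltnW.
Qed.

Definition wfc (M : nat) (c : cst) : bool :=
  match c with
  | CR _ c | CB _ c | CA _ c => (3 < c)%N
  | CS _ c => (10 <= c <= 16)%N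
  | CP t1 c1 t2 c2 => [&& (10 <= c1 <= 16)%N, (10 <= c2 <= 16)%N &
       (t1 != t2) || (if M == 0%N then (c1 < c2)%N else c1 %% M != c2 %% M)]
  | CG => true
  end.

Lemma sem_good m f i M c : is_gammaR_fun m.+1 2 f ->
  (forall h, is_gammaR_fun m.+1 2 h -> (#|V2 m.+1 f| <= #|V2 m.+1 h|)%N) ->
  4 < m.+1 -> (M = 0%N /\ 6 < m.+1) \/ M = m.+1 ->
  (r_f_Vp m.+1 2 f i 7 <= 1 / 2)%R ->
  hwin f (i + m * 10) true 13 = 2%N ->
  wfc M c -> sem (hwin f (i + m * 10)) c.
Proof.
move=> Hg Hmin Hm HM Hr H13.
have Hf := Hg.1.
have R0 : forall w, (0 <= r_f m.+1 2 f w)%R by move=> w; exact: r_ge0.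
case: c => [t c|t c|t c|t c|t1 c1 t2 c2|] /=.
- by move=> Hc; case/and3P: (win_rules (i + m * 10) t Hm Hg Hmin Hc).
- by move=> Hc; case/and3P: (win_rules (i + m * 10) t Hm Hg Hmin Hc).
- by move=> Hc; case/and3P: (win_rules (i + m * 10) t Hm Hg Hmin Hc).
- move=> Hc; apply: half_le1.
  have Hc3 : 3 < c by case/andP: Hc => Hc _; apply: leq_trans Hc.
  rewrite -r_win //; apply: le_trans Hr; apply: sum1 => //; exact: inW.
- case/and3P => Hc1 Hc2 Hd; apply: half_le2.
  have Hc13 : 3 < c1 by case/andP: Hc1 => Hc _; apply: leq_trans Hc.
  have Hc23 : 3 < c2 by case/andP: Hc2 => Hc _; apply: leq_trans Hc.
  rewrite -!r_win //; apply: le_trans Hr; apply: sum2 => //; try exact: inW.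
  apply: vx_ne; case/orP: Hd => [->//|Hd]; apply/orP; right.
  case: HM => [[EM H7]|EM]; move: Hd; rewrite EM //=.
  move=> Hlt; apply: ltn_modne => //.
  case/andP: Hc1 => H10 _; case/andP: Hc2 => _ H16.
  apply: (leq_ltn_trans H16); exact: (leq_add H10 H7).
- by rewrite H13.
Qed.

Lemma final (ix : bool -> nat -> nat) (bb : seq (seq cst)) (cs : seq cst) (K : nat) (h : bool -> nat -> nat) (s : seq nat) :
  search ix bb K [::] -> (forall k c, c \in nth [::] bb k -> c \in cs) -> size s = K ->
  all (fun v => v <= 2)%N s ->
  (forall c, c \in cs -> forall t j, (t, j) \in acc c -> nth 0%N s (ix t j) = h t j) ->
  (forall c, c \in cs -> sem h c) -> False.
Proof.
move=> Hs Hbb Hsz Hall Htb Hsem.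
have [c [Hc Hn]] := search_sound (P := fun c => c \in cs) Hbb Hs Hsz Hall.
have E : sem (look ix ([::] ++ s)) c = sem h c by apply: sem_ext => t j Hj; exact: (Htb c Hc t j Hj).
by move: Hn; rewrite E Hsem.
Qed.

Definition rep (M j : nat) : nat := if M == 0%N then j else j %% M.

Definition tblok M (tbl : seq (bool * nat)) ix (cs : seq cst) : bool :=
  all (fun c => all (fun p => (ix p.1 p.2 < size tbl)%N &&
     (nth (false, 0%N) tbl (ix p.1 p.2) == (p.1, rep M p.2))) (acc c)) cs.

Lemma tbl_cons M tbl ix cs h : tblok M tbl ix cs -> (forall t j, h t (rep M j) = h t j) ->
  forall c, c \in cs -> forall t j, (t, j) \in acc c ->
  nth 0%N [seq h p.1 p.2 | p <- tbl] (ix t j) = h t j.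
Proof.
move=> /allP Hok Hrep c Hc t j Hj; move/allP: (Hok c Hc) => /(_ _ Hj) /andP [Hlt /eqP Hn].
by rewrite (nth_map (false, 0%N)) // Hn /= Hrep.
Qed.

Lemma bks_mem ix K cs k c : c \in nth [::] (bks ix K cs) k -> c \in cs.
Proof.
rewrite /bks; case: (ltnP k K) => Hk; last by rewrite nth_default ?size_mkseq.
by rewrite nth_mkseq // mem_filter => /andP [].
Qed.

Lemma hwin_rep m (f : gpV m.+1 -> nat) Q t j : hwin f Q t (rep m.+1 j) = hwin f Q t j.
Proof. by rewrite /hwin /rep /=; congr f; apply/eqP; rewrite vx_eq eqxx /= modnDml. Qed.

Definition bbL := Eval vm_compute in bks ixL 26 csL.
Definition bbF := Eval vm_compute in bks ixF 10 csF.
Definition bbS := Eval vm_compute in bks ixS 12 csS.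
Lemma bbL_mem k c : c \in nth [::] bbL k -> c \in csL.
Proof. have -> : bbL = bks ixL 26 csL by vm_compute. exact: bks_mem. Qed.
Lemma bbF_mem k c : c \in nth [::] bbF k -> c \in csF.
Proof. have -> : bbF = bks ixF 10 csF by vm_compute. exact: bks_mem. Qed.
Lemma bbS_mem k c : c \in nth [::] bbS k -> c \in csS.
Proof. have -> : bbS = bks ixS 12 csS by vm_compute. exact: bks_mem. Qed.
Lemma L_ok : search ixL bbL 26 [::]. Proof. by vm_compute. Qed.
Lemma F_ok : search ixF bbF 10 [::]. Proof. by vm_compute. Qed.
Lemma S_ok : search ixS bbS 12 [::]. Proof. by vm_compute. Qed.
Lemma L_tbl : tblok 0 tblL ixL csL. Proof. by vm_compute. Qed.
Lemma F_tbl : tblok 5 tblF ixF csF. Proof. by vm_compute. Qed.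
Lemma S_tbl : tblok 6 tblS ixS csS. Proof. by vm_compute. Qed.
Lemma L_wf : all (wfc 0) csL. Proof. by vm_compute. Qed.
Lemma F_wf : all (wfc 5) csF. Proof. by vm_compute. Qed.
Lemma S_wf : all (wfc 6) csS. Proof. by vm_compute. Qed.

Unset Implicit Arguments.
Local Open Scope ring_scope.

Theorem lemma2p7 (n : nat) (f : gpV n -> nat) :
  (5 <= n)%N ->
  is_gammaR_fun n 2 f ->
  (forall g : gpV n -> nat, is_gammaR_fun n 2 g -> (#|V2 n f| <= #|V2 n g|)%N) ->
  forall i : nat,
    r_f_Vp n 2 f i 7 <= 1 / 2 ->
    forall w : gpV n, u_vtx w -> val w.2 = ((i + 3) %% n)%N -> w \notin V2 n f.
Proof.
move=> H5 Hg Hmin i Hr w Hu Hw.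
case: n f H5 Hg Hmin Hr w Hu Hw => [|m] // f H5 Hg Hmin Hr w Hu Hw.
set Q := (i + m * 10)%N.
have Ew : w = vx m true (13 + Q).
  case: w Hu Hw => [[] y] //= _ Hy; apply/eqP; rewrite pair_vx eqxx /= Hy.
  have -> : (13 + Q = 10 * m.+1 + (i + 3))%N.
    rewrite /Q [(10 * _)%N]mulnC mulSn (addnC 10 (m * 10)) -addnA (addnC (m*10)) addnA.
    by congr (_ + _)%N; rewrite addnCA addnC.
  by rewrite modnMDl.
rewrite Ew inE; apply/negP => /eqP Hw2.
have H13 : hwin f Q true 13 = 2%N := Hw2.
have Hb : forall t j, (hwin f Q t j <= 2)%N by move=> t j; exact: Hg.1.1.
case: (ltnP m 6) => Hm6.
- have [E4|E5] : m = 4%N \/ m = 5%N.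
    by move: H5 Hm6; case: m {Q Ew Hw2 H13 Hb Hg Hmin Hr f w Hu Hw} => [|[|[|[|[|[|m]]]]]] //; auto.
  + subst m.
    apply: (@final ixF bbF csF 10 (hwin f Q) [seq hwin f Q p.1 p.2 | p <- tblF]).
    * exact: F_ok.
    * exact: bbF_mem.
    * by rewrite size_map.
    * by rewrite all_map; apply/allP => p _; exact: Hb.
    * apply: (tbl_cons F_tbl) => t j; exact: (@hwin_rep 4 f Q t j).
    * move=> c Hc; apply: (@sem_good 4 f i 5) => //; first by right.
      by move/allP: F_wf; apply.
  + subst m.
    apply: (@final ixS bbS csS 12 (hwin f Q) [seq hwin f Q p.1 p.2 | p <- tblS]).
    * exact: S_ok.
    * exact: bbS_mem.
    * by rewrite size_map.
    * by rewrite all_map; apply/allP => p _; exact: Hb.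
    * apply: (tbl_cons S_tbl) => t j; exact: (@hwin_rep 5 f Q t j).
    * move=> c Hc; apply: (@sem_good 5 f i 6) => //; first by right.
      by move/allP: S_wf; apply.
- apply: (@final ixL bbL csL 26 (hwin f Q) [seq hwin f Q p.1 p.2 | p <- tblL]).
  * exact: L_ok.
  * exact: bbL_mem.
  * by rewrite size_map.
  * by rewrite all_map; apply/allP => p _; exact: Hb.
  * by apply: (tbl_cons L_tbl).
  * move=> c Hc; apply: (@sem_good m f i 0) => //; first by left.
    by move/allP: L_wf; apply.
Qed.
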